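(* For every density operator $\rho$ on $\mathbb{C}^d$, $C_{\mathcal{F}}(\rho)\le N_c(\rho)/d$.
   Context: Fix the computational basis $\{|i\rangle\}_{i=0}^{d-1}$ of $\mathbb{C}^d$ as the incoherent basis. A maximally coherent state is a pure state $\frac1{\sqrt d}\sum_{i}e^{\mathrm{i}\theta_i}|i\rangle$; the quantum coherence fraction is $C_{\mathcal{F}}(\rho)=\max_{|\phi\rangle\text{ maximally coherent}}\langle\phi|\rho|\phi\rangle$. The coherence rank $R_c(|\psi\rangle)$ of a pure state is the number of nonzero coefficients of $|\psi\rangle$ in the incoherent basis. The coherence number is $N_c(\rho)=\min_{\{p_i,|\psi_i\rangle\}}\max_i R_c(|\psi_i\rangle)$, the minimum over all decompositions $\rho=\sum_ip_i|\psi_i\rangle\langle\psi_i|$ into pure states with $p_i>0$. *)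

(* Defs.v *)
From mathcomp Require Import all_boot all_order all_algebra.
From mathcomp Require Import complex.
From mathcomp Require Import boolp classical_sets reals.
Set Implicit Arguments. Unset Strict Implicit. Unset Printing Implicit Defensive.
Import Order.TTheory GRing.Theory Num.Theory.
Local Open Scope ring_scope.

Section QuantumCoherence.
Variables (R : realType) (d : nat).
Local Notation C := (R[i]).

Definition adjmx m n (A : 'M[C]_(m, n)) : 'M[C]_(n, m) := (map_mx Num.conj A)^T.

Definition braket (phi : 'cV[C]_d) (A : 'M[C]_d) (psi : 'cV[C]_d) : C :=
  (adjmx phi *m A *m psi) 0 0.

Definition psd (A : 'M[C]_d) : Prop :=
  adjmx A = A /\ forall x : 'cV[C]_d, 0 <= braket x A x.

Definition density (rho : 'M[C]_d) : Prop := psd rho /\ \tr rho = 1.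

Definition pure_state (psi : 'cV[C]_d) : Prop := braket psi 1%:M psi = 1.

(* maximally coherent state  (1/sqrt d) sum_i e^{i theta_i} |i> ;
   the phases e^{i theta_i} are exactly the complex numbers of modulus 1 *)
Definition max_coherent (phi : 'cV[C]_d) : Prop :=
  exists u : 'I_d -> C, (forall i, `|u i| = 1) /\
    phi = \col_i (u i / sqrtC (d%:R : C)).

(* quantum coherence fraction: max over maximally coherent states of <phi|rho|phi>
   (a real number since rho is Hermitian; we take its real part) *)
Definition coherence_fraction (rho : 'M[C]_d) : R :=
  sup [set x : R | exists phi, max_coherent phi /\ x = complex.Re (braket phi rho phi)].

Definition coherence_rank (psi : 'cV[C]_d) : nat := #|[set i | psi i 0 != 0]|.

Definition decomposition_with_rank_le (rho : 'M[C]_d) (n : nat) : Prop :=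
  exists (k : nat) (p : 'I_k -> C) (psi : 'I_k -> 'cV[C]_d),
    (forall j, 0 < p j) /\ (forall j, pure_state (psi j)) /\
    rho = \sum_(j < k) p j *: (psi j *m adjmx (psi j)) /\
    (\max_(j < k) coherence_rank (psi j) <= n)%N.

(* coherence number: the minimum over pure-state decompositions of the maximal
   coherence rank (defined as 0 if rho admits no decomposition, which never
   happens for a density operator) *)
Definition coherence_number (rho : 'M[C]_d) : nat :=
  match pselect (exists n, asbool (decomposition_with_rank_le rho n)) with
  | left ex => ex_minn ex
  | right _ => 0%N
  end.

End QuantumCoherence.

(* Main.v *)
Require Import Defs.
From mathcomp Require Import all_boot all_order all_algebra.
From mathcomp Require Import complex.
From mathcomp Require Import boolp classical_sets reals.
From mathcomp Require Import spectral sesquilinear ring.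
Set Implicit Arguments. Unset Strict Implicit. Unset Printing Implicit Defensive.
Import Order.TTheory GRing.Theory Num.Theory.
Local Open Scope ring_scope.
Ltac sh := match goal with |- ?g => idtac g end.


Lemma sum_sq_le (F : numDomainType) (I : finType) (S : {pred I}) (b : I -> F) :
  (forall i, b i \is Num.real) ->
  (\sum_(i in S) b i) ^+ 2 <= #|S|%:R * \sum_(i in S) b i ^+ 2.
Proof.
move=> breal.
have H : 0 <= \sum_(i in S) \sum_(j in S) (b i - b j) ^+ 2.
  apply: sumr_ge0 => i _; apply: sumr_ge0 => j _.
  by rewrite -realEsqr realB.
set T := \sum_(i in S) b i ^+ 2; set U := \sum_(i in S) b i.
have E : \sum_(i in S) \sum_(j in S) (b i - b j) ^+ 2 =
   (#|S|%:R * T - U ^+ 2) *+ 2.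
  rewrite (eq_bigr (fun i => (b i ^+ 2) *+ #|S| - (b i * U) *+ 2 + T)); last first.
    move=> i _; under eq_bigr => j _ do rewrite sqrrB.
    rewrite big_split sumrB /= sumr_const.
    by rewrite sumrMnl -mulr_sumr.
  rewrite big_split sumrB /= sumr_const.
  rewrite !sumrMnl -mulr_suml -/T -/U. by rewrite mulrnBl expr2 addrAC -mulr2n mulr_natl.
by move: H; rewrite E pmulrn_lge0 // subr_ge0.
Qed.


Section S.
Variables (R : realType) (d : nat).
Local Notation C := (R[i]).

Lemma adjmxM m n p (A : 'M[C]_(m,n)) (B : 'M[C]_(n,p)) :
  adjmx (A *m B) = adjmx B *m adjmx A.
Proof. by rewrite /adjmx map_mxM trmx_mul. Qed.

Lemma adjmxK m n (A : 'M[C]_(m,n)) : adjmx (adjmx A) = A.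
Proof.
rewrite /adjmx map_trmx trmxK -map_mx_comp.
by apply/matrixP => i j; rewrite !mxE /= conjCK.
Qed.

Lemma braket_sum (phi : 'cV[C]_d) k (p : 'I_k -> C) (M : 'I_k -> 'M[C]_d) :
  braket phi (\sum_j p j *: M j) phi = \sum_j p j * braket phi (M j) phi.
Proof.
rewrite /braket mulmx_sumr mulmx_suml summxE; apply: eq_bigr => j _.
by rewrite -scalemxAr -scalemxAl mxE.
Qed.

Lemma braket_rank1 (phi psi : 'cV[C]_d) :
  braket phi (psi *m adjmx psi) phi = `|(adjmx phi *m psi) 0 0| ^+ 2.
Proof.
rewrite /braket mulmxA -(mulmxA (adjmx phi *m psi)).
rewrite -{2}(adjmxK phi) -adjmxM mxE big_ord1 normCK.
by rewrite /adjmx !mxE.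
Qed.

Lemma pure_sum (psi : 'cV[C]_d) : pure_state psi -> \sum_i `|psi i 0| ^+ 2 = 1.
Proof.
rewrite /pure_state /braket mulmx1 mxE => <-.
by apply: eq_bigr => i _; rewrite normCKC /adjmx !mxE.
Qed.

Lemma tr_rank1 (psi : 'cV[C]_d) : pure_state psi -> \tr (psi *m adjmx psi) = 1.
Proof.
by rewrite /pure_state /braket mulmx1 mxtrace_mulC trace_mx11.
Qed.

End S.


Section S.
Variables (R : realType) (d : nat).
Local Notation C := (R[i]).

Lemma overlap_bound (phi psi : 'cV[C]_d) (n : nat) : (0 < d)%N ->
  max_coherent phi -> pure_state psi -> (coherence_rank psi <= n)%N ->
  `|(adjmx phi *m psi) 0 0| ^+ 2 <= n%:R / d%:R.
Proof.
move=> d0 [u [u1 ->]] /pure_sum ps rk.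
set S := [set i | psi i 0 != 0].
set s := sqrtC (d%:R : C).
have s0 : 0 < s by rewrite sqrtC_gt0 ltr0n.
have E : (adjmx (\col_i (u i / s)) *m psi) 0 0 = \sum_(i in S) (u i / s)^* * psi i 0.
  rewrite mxE (bigID (mem S)) /= [X in _ + X]big1 ?addr0.
    by apply: eq_bigr => i _; rewrite /adjmx !mxE.
  by move=> i; rewrite inE negbK => /eqP ->; rewrite mulr0.
have N : `|(adjmx (\col_i (u i / s)) *m psi) 0 0| <= s^-1 * \sum_(i in S) `|psi i 0|.
  rewrite E mulr_sumr; apply: le_trans (ler_norm_sum _ _ _) _.
  apply: ler_sum => i _; rewrite normrM norm_conjC normrM u1 mul1r normfV.
  by rewrite (gtr0_norm s0).
have N2 : `|(adjmx (\col_i (u i / s)) *m psi) 0 0| ^+ 2 <=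
          (s^-1 * \sum_(i in S) `|psi i 0|) ^+ 2.
  by rewrite !expr2; apply: ler_pM.
apply: le_trans N2 _.
rewrite exprMn exprVn sqrtCK mulrC ler_pdivrMr ?ltr0n // mulfVK ?pnatr_eq0 -?lt0n //.
apply: le_trans (sum_sq_le _ _) _.
  by move=> i; rewrite normr_real.
have -> : n%:R = n%:R * (1 : C) by rewrite mulr1.
apply: ler_pM.
- exact: ler0n.
- by apply: sumr_ge0 => i _; rewrite exprn_ge0.
- by rewrite ler_nat.
rewrite -ps [X in _ <= X](bigID (mem S)) /= lerDl.
by apply: sumr_ge0 => i _; rewrite exprn_ge0.
Qed.

End S.


Section S.
Variables (R : realType) (d : nat).
Local Notation C := (R[i]).

Lemma decomp_bound (rho : 'M[C]_d) (n : nat) (phi : 'cV[C]_d) : (0 < d)%N ->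
  \tr rho = 1 -> decomposition_with_rank_le rho n -> max_coherent phi ->
  braket phi rho phi <= n%:R / d%:R.
Proof.
move=> d0 tr1 [k [p [psi [pp [pure [rhoE mx]]]]]] mc.
have sp : \sum_j p j = 1.
  rewrite -tr1 rhoE raddf_sum; apply: eq_bigr => j _.
  by rewrite /= mxtraceZ tr_rank1 ?mulr1.
rewrite rhoE braket_sum.
under eq_bigr => j _ do rewrite braket_rank1.
apply: le_trans (_ : \sum_j p j * (n%:R / d%:R) <= _).
  apply: ler_sum => j _; apply: ler_wpM2l; first exact: ltW.
  apply: overlap_bound => //; apply: leq_trans mx.
  exact: (leq_bigmax j).
by rewrite -mulr_suml sp mul1r.
Qed.

Lemma Re_le (z : C) (x : R) : z <= x%:C%C -> complex.Re z <= x.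
Proof. by rewrite lecE => /andP[]. Qed.

Lemma natdivC (n : nat) : ((n%:R / d%:R : R)%:C%C : C) = n%:R / d%:R.
Proof. by rewrite rmorphM fmorphV !rmorph_nat. Qed.

End S.


Section S.
Variables (R : realType) (d : nat).
Local Notation C := (R[i]).

Lemma adjmxE m n (A : 'M[C]_(m,n)) : adjmx A = (A ^t* )%sesqui.
Proof. by rewrite /adjmx map_trmx. Qed.

Lemma row_col_entry m n (i : 'I_m) (j : 'I_n) (A : 'M[C]_(m,d)) (M : 'M[C]_d)
  (B : 'M[C]_(d,n)) : (row i A *m M *m col j B) 0 0 = (A *m M *m B) i j.
Proof. by rewrite -row_mul !mxE; apply: eq_bigr => k _; rewrite !mxE. Qed.

Lemma spectral_decomp (rho : 'M[C]_d) : psd rho ->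
  exists (s : 'I_d -> C) (psi : 'I_d -> 'cV[C]_d),
    (forall j, 0 <= s j) /\ (forall j, pure_state (psi j)) /\
    rho = \sum_(j < d) s j *: (psi j *m adjmx (psi j)).
Proof.
move=> [herm pos].
have herm' : (rho ^t* )%sesqui = rho by rewrite -adjmxE.
have nrm : rho \is normalmx by apply/normalmxP; rewrite herm'.
set P := spectralmx rho; set D := spectral_diag rho.
have rhoE : rho = invmx P *m diag_mx D *m P by apply/orthomx_spectralP.
have Pu : P \is unitarymx by apply: spectral_unitarymx.
rewrite invmx_unitary // in rhoE.
set Q := (P ^t* )%sesqui in rhoE.
have PQ : P *m Q = 1%:M by apply/unitarymxP.
have adjpsi i : adjmx (col i Q) = row i P.
  by apply/matrixP => a b; rewrite /adjmx !mxE conjCK.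
have Dii i : D 0 i = braket (col i Q) rho (col i Q).
  rewrite /braket adjpsi row_col_entry rhoE !mulmxA PQ mul1mx -mulmxA PQ mulmx1.
  by rewrite mxE eqxx mulr1n.
exists (fun i => D 0 i), (fun i => col i Q); split; last split.
- by move=> j; rewrite Dii.
- move=> j; rewrite /pure_state /braket adjpsi row_col_entry mulmx1 PQ.
  by rewrite mxE eqxx.
apply/matrixP => a b; rewrite {1}rhoE summxE mul_mx_diag mxE.
apply: eq_bigr => k _; rewrite adjpsi !mxE big_ord1 !mxE.
by rewrite mulrCA mulrA.
Qed.

End S.


Lemma decomp_exists (R : realType) (d : nat) (rho : 'M[R[i]]_d) :
  density rho -> exists n, decomposition_with_rank_le rho n.
Proof.
move=> [/spectral_decomp [s [psi [s0 [pure rhoE]]]] _].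
set S := [set j | 0 < s j].
pose p (j : 'I_#|S|) := s (enum_val j).
pose psi' (j : 'I_#|S|) := psi (enum_val j).
exists (\max_(j < #|S|) coherence_rank (psi' j)), #|S|, p, psi'.
split; first by move=> j; rewrite /p; have := enum_valP j; rewrite inE.
split; first by move=> j; apply: pure.
split => //.
rewrite rhoE (bigID (mem S)) /= [X in _ + X]big1 ?addr0.
  by rewrite big_enum_val.
move=> j; rewrite inE lt_def => /nandP [/negbNE/eqP ->|]; first by rewrite scale0r.
by rewrite s0.
Qed.

Unset Implicit Arguments.
Theorem mainTheorem5 (R : realType) (d : nat) (rho : 'M[R[i]]_d) :
  density rho ->
  coherence_fraction rho <= (coherence_number rho)%:R / d%:R.
Proof.
move=> dens; have tr1 := dens.2.
have d0 : (0 < d)%N.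
  rewrite lt0n; apply/negP => /eqP d0; move: tr1.
  rewrite /mxtrace big1 => [/esym/eqP|i]; first by rewrite oner_eq0.
  by case: i => m mi; exfalso; move: mi; rewrite d0.
rewrite /coherence_number; case: pselect => [ex|nex]; last first.
  by exfalso; apply: nex; have [n hn] := decomp_exists dens; exists n; apply/asboolP.
case: (ex_minnP ex) => m /asboolP hm _.
apply: ge_sup.
  pose phi0 : 'cV[R[i]]_d := \col_i (1 / sqrtC (d%:R : R[i])).
  exists (complex.Re (braket phi0 rho phi0)); exists phi0; split => //.
  by exists (fun _ => 1); split => //; rewrite normr1.
move=> x [phi [mc ->]]; apply: Re_le; rewrite natdivC.
exact: decomp_bound.
Qed.
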